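(* Let $\gamma\in\{0\}\cup(0,\infty)\cup\{\infty\}$. The following three problems are equivalent (in particular, their optimal values coincide): 1) The max-flow problem $\sup\ \sum_{x\in V}p_s(x)+\sum_{i=1}^n(\rho_i^1S_i^\ell-\rho_i^2S_i^u)$ over $p_s,p_i:V\to\mathbb{R}$, $q_i:V\times V\to\mathbb{R}$, $\rho_i^1,\rho_i^2$, subject to, for all $i\in I$: $|q_i(x,y)|\le1$ for all $(x,y)$ with $\{x,y\}\in E$; $p_i(x)\le C_i(x)$ for all $x$; $(\mathrm{div}_wq_i)(x)-p_s(x)+p_i(x)=\rho_i^1-\rho_i^2$ for all $x$; $0\le\rho_i^1,\rho_i^2\le\gamma$. 2) The primal-dual problem $$\min_{u:V\to\mathbb{R}^n}\ \sup_{p_s,p,q,\rho^1,\rho^2}\ \sum_{x\in V}p_s(x)+\sum_{i=1}^n(\rho_i^1S_i^\ell-\rho_i^2S_i^u)+\sum_{i=1}^n\sum_{x\in V}u_i(x)\big((\mathrm{div}_wq_i)(x)-p_s(x)+p_i(x)+\rho_i^2-\rho_i^1\big),$$ where the supremum is subject to $|q_i(x,y)|\le1$ for $\{x,y\}\in E$, $p_i(x)\le C_i(x)$ for all $x$, and $0\le\rho_i^1,\rho_i^2\le\gamma$, and $u$ is unconstrained. 3) The convex relaxed problem $\min_{u\in\mathcal{B}'}\sum_{i=1}^n\sum_{x\in V}C_i(x)u_i(x)+\sum_{i=1}^nTV_w(u_i)$ subject to the size constraints $S_i^\ell\le\|u_i\|\le S_i^u$ for all $i$ if $\gamma=\infty$,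 with the size penalty $\sum_{i=1}^nP_\gamma(\|u_i\|)$ added to the energy if $0<\gamma<\infty$, and with no size constraints if $\gamma=0$.
   Context: Let $G=(V,E)$ be a finite undirected graph with symmetric weights $w(x,y)=w(y,x)>0$ for $\{x,y\}\in E$ and $w(x,y)=0$ otherwise. $TV_w(v)=\frac12\sum_{x,y\in V}w(x,y)|v(y)-v(x)|$ for $v:V\to\mathbb{R}$. For $\phi:V\times V\to\mathbb{R}$, $(\mathrm{div}_w\phi)(x)=\frac12\sum_{y\in V}w(x,y)(\phi(x,y)-\phi(y,x))$. Let $n\ge2$, $I=\{1,\dots,n\}$, $C_i:V\to\mathbb{R}$ given; $\|u_i\|=\sum_xu_i(x)$; $\mathcal{B}'=\{u:V\to[0,1]^n:\sum_iu_i(x)=1\ \forall x\}$. Size bounds are integers $0\le S_i^\ell\le S_i^u$ with $\sum_iS_i^\ell\le|V|\le\sum_iS_i^u$; for $0<\gamma<\infty$, $P_\gamma(t)=0$ if $S_i^\ell\le t\le S_i^u$, $\gamma(t-S_i^u)$ if $t>S_i^u$, $\gamma(S_i^\ell-t)$ if $t<S_i^\ell$. For $\gamma=\infty$, $[0,\gamma]$ means $[0,\infty)$. *)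

(* Defs.v *)
From HB Require Import structures.
From mathcomp Require Import all_boot all_order all_algebra.
From mathcomp Require Import all_classical all_reals.
From mathcomp Require Import ereal.
Set Implicit Arguments. Unset Strict Implicit. Unset Printing Implicit Defensive.
Import Order.TTheory GRing.Theory Num.Theory.
Local Open Scope ring_scope.

Section Graph.
Variables (R : realType) (V : finType) (n : nat).
Variable (w : V -> V -> R).

Definition TVw (v : V -> R) : R :=
  2^-1 * \sum_(x : V) \sum_(y : V) w x y * `|v y - v x|.

Definition divw (phi : V -> V -> R) (x : V) : R :=
  2^-1 * \sum_(y : V) w x y * (phi x y - phi y x).

Definition unorm (v : V -> R) : R := \sum_(x : V) v x.

Definition inBprime (u : 'I_n -> V -> R) : Prop :=
  (forall i x, 0 <= u i x <= 1) /\ (forall x, \sum_(i < n) u i x = 1).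

Definition Pgam (g : R) (Sl Su : nat) (t : R) : R :=
  if t > Su%:R then g * (t - Su%:R)
  else if t < Sl%:R then g * (Sl%:R - t) else 0.

Variables (e : rel V) (C : 'I_n -> V -> R) (Sl Su : 'I_n -> nat).

Definition rho_ok (gamma : \bar R) (r : R) : Prop := 0 <= r /\ (r%:E <= gamma)%E.

Definition dual_box (gamma : \bar R) (p : 'I_n -> V -> R)
  (q : 'I_n -> V -> V -> R) (r1 r2 : 'I_n -> R) : Prop :=
  forall i, (forall x y, e x y -> `|q i x y| <= 1) /\
            (forall x, p i x <= C i x) /\ rho_ok gamma (r1 i) /\ rho_ok gamma (r2 i).

Definition flow_obj (ps : V -> R) (r1 r2 : 'I_n -> R) : R :=
  \sum_(x : V) ps x + \sum_(i < n) (r1 i * (Sl i)%:R - r2 i * (Su i)%:R).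

Definition maxflow_value (gamma : \bar R) : \bar R :=
  ereal_sup [set z : \bar R | exists (ps : V -> R) (p : 'I_n -> V -> R)
    (q : 'I_n -> V -> V -> R) (r1 r2 : 'I_n -> R),
    [/\ dual_box gamma p q r1 r2,
        (forall i x, divw (q i) x - ps x + p i x = r1 i - r2 i) &
        z = (flow_obj ps r1 r2)%:E]].

Definition lagrangian (u : 'I_n -> V -> R) (ps : V -> R) (p : 'I_n -> V -> R)
  (q : 'I_n -> V -> V -> R) (r1 r2 : 'I_n -> R) : R :=
  flow_obj ps r1 r2 +
  \sum_(i < n) \sum_(x : V) u i x * (divw (q i) x - ps x + p i x + r2 i - r1 i).

Definition pd_inner (gamma : \bar R) (u : 'I_n -> V -> R) : \bar R :=
  ereal_sup [set z : \bar R | exists (ps : V -> R) (p : 'I_n -> V -> R)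
    (q : 'I_n -> V -> V -> R) (r1 r2 : 'I_n -> R),
    dual_box gamma p q r1 r2 /\ z = (lagrangian u ps p q r1 r2)%:E].

Definition primaldual_value (gamma : \bar R) : \bar R :=
  ereal_inf [set pd_inner gamma u | u in [set: 'I_n -> V -> R]].

Definition relaxed_energy (u : 'I_n -> V -> R) : R :=
  \sum_(i < n) \sum_(x : V) C i x * u i x + \sum_(i < n) TVw (u i).

Definition size_ok (u : 'I_n -> V -> R) : Prop :=
  forall i, (Sl i)%:R <= unorm (u i) <= (Su i)%:R.

Definition relaxed_obj (gamma : \bar R) (u : 'I_n -> V -> R) : \bar R :=
  match gamma with
  | EFin g => if 0 < g then (relaxed_energy u +
                  \sum_(i < n) Pgam g (Sl i) (Su i) (unorm (u i)))%:E
              else (relaxed_energy u)%:E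
  | _ => (relaxed_energy u)%:E
  end.

Definition relaxed_feasible (gamma : \bar R) (u : 'I_n -> V -> R) : Prop :=
  inBprime u /\ (gamma = +oo%E -> size_ok u).

Definition relaxed_value (gamma : \bar R) : \bar R :=
  ereal_inf [set relaxed_obj gamma u | u in relaxed_feasible gamma].
End Graph.

(* Main.v *)
Require Import Defs.
From HB Require Import structures.
From mathcomp Require Import all_boot all_order all_algebra.
From mathcomp Require Import all_classical all_reals.
From mathcomp Require Import ereal.
From mathcomp Require Import lra ring.
Set Implicit Arguments. Unset Strict Implicit. Unset Printing Implicit Defensive.
Import Order.TTheory GRing.Theory Num.Theory.
Local Open Scope ring_scope.

Section FM.
Variable R : realFieldType.

Lemma exists_max (K : finType) (N : pred K) (L : K -> R) q0 :
  N q0 -> exists2 qm, N qm & forall q, N q -> L q <= L qm.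
Proof.
move=> h; case: (@arg_maxP _ _ K q0 N L h) => qm hqm hmax.
by exists qm.
Qed.

Lemma exists_min (K : finType) (N : pred K) (L : K -> R) q0 :
  N q0 -> exists2 qm, N qm & forall q, N q -> L qm <= L q.
Proof.
move=> h; case: (@arg_minP _ _ K q0 N L h) => qm hqm hmax.
by exists qm.
Qed.

Lemma choose_t (K : finType) (P N : pred K) (L U : K -> R) (s : K -> bool) :
 (forall p q, P p -> N q -> L q <= U p /\ ((s p || s q) -> L q < U p)) ->
 exists d, (forall q, N q -> L q <= d /\ (s q -> L q < d)) /\
           (forall p, P p -> d <= U p /\ (s p -> d < U p)).
Proof.
move=> H.
case: (pickP N) => [q0 hq0|hN]; case: (pickP P) => [p0 hp0|hP].
- have [qm hqm hqmax] := exists_max L hq0.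
  have [pm hpm hpmin] := exists_min U hp0.
  exists ((L qm + U pm) / 2); split.
  + move=> q hq; have [h1 h2] := H pm q hpm hq; have h3 := hqmax q hq.
    have [h4 _] := H pm qm hpm hqm.
    split; first lra.
    move=> sq; have := h2; rewrite sq orbT => /(_ isT) h5; lra.
  + move=> p hp; have [h1 h2] := H p qm hp hqm; have h3 := hpmin p hp.
    have [h4 _] := H pm qm hpm hqm.
    split; first lra.
    move=> sp; have := h2; rewrite sp /= => /(_ isT) h5; lra.
- have [qm hqm hqmax] := exists_max L hq0.
  exists (L qm + 1); split.
  + by move=> q hq; have := hqmax q hq; split; lra.
  + by move=> p; rewrite hP.
- have [pm hpm hpmin] := exists_min U hp0.
  exists (U pm - 1); split.
  + by move=> q; rewrite hN.
  + by move=> p hp; have := hpmin p hp; split; lra.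
- by exists 0; split => [q|p]; rewrite ?hN ?hP.
Qed.

Variable J : finType.

Definition Lin (l : (J -> R) -> R) :=
  forall (a : R) (x y : J -> R), l (fun i => a * x i + y i) = a * l x + l y.
Definition supp (S : {set J}) (l : (J -> R) -> R) :=
  forall x x', (forall j, j \in S -> x j = x' j) -> l x = l x'.
Definition sat (K : finType) (l : K -> (J -> R) -> R) (b : K -> R) (s : K -> bool)
  (x : J -> R) := forall k, if s k then l k x < b k else l k x <= b k.
Definition good (K : finType) (l : K -> (J -> R) -> R) (b : K -> R) (s : K -> bool)
  (y : K -> R) :=
  [/\ forall k, 0 <= y k, forall z, \sum_k y k * l k z = 0 &
      (\sum_k y k * b k < 0 \/
       (\sum_k y k * b k <= 0 /\ exists k, s k && (0 < y k)))].

Definition delta (j0 : J) : J -> R := fun j => (j == j0)%:R.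
Definition upd (x : J -> R) j0 t : J -> R := fun j => if j == j0 then t else x j.

Lemma Lin0 l : Lin l -> l (fun _ => 0) = 0.
Proof.
move=> h; have := h 1 (fun _ => 0) (fun _ => 0).
have -> : (fun i : J => 1 * (0:R) + 0) = (fun _ => 0).
  by apply: funext => i; rewrite mul1r addr0.
rewrite mul1r; set t := l _ => ht; lra.
Qed.

Lemma Lin_upd l x j0 t : Lin l -> l (upd x j0 t) = l x + l (delta j0) * (t - x j0).
Proof.
move=> h.
have -> : upd x j0 t = (fun j => (t - x j0) * delta j0 j + x j).
  apply: funext => j; rewrite /upd /delta; case: eqP => [->|_].
    by rewrite mulr1 subrK.
  by rewrite mulr0 add0r.
by rewrite h addrC mulrC.
Qed.

End FM.

Lemma pair_key (R : realFieldType) (ap aq sp sq : R) : 0 < ap -> aq < 0 ->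
  sp / ap - sq / aq = (- aq * sp + ap * sq) / (ap * - aq).
Proof.
move=> hp hq; have hp' : ap != 0 by rewrite gt_eqF.
have hq' : aq != 0 by rewrite lt_eqF.
by field; rewrite hp' hq'.
Qed.

Lemma sum_delta (R : ringType) (K : finType) (F : K -> R) k0 :
  \sum_k F k * (k == k0)%:R = F k0.
Proof.
rewrite (bigD1 k0) //= eqxx mulr1 big1 ?addr0 // => k /negbTE ->.
by rewrite mulr0.
Qed.

Lemma sum_delta' (R : ringType) (K : finType) (F : K -> R) k0 :
  \sum_k (k == k0)%:R * F k = F k0.
Proof.
rewrite (bigD1 k0) //= eqxx mul1r big1 ?addr0 // => k /negbTE ->.
by rewrite mul0r.
Qed.
Section FMmain.
Variable R : realFieldType.
Variable J : finType.
Local Notation Lin := (@Lin R J).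
Local Notation supp := (@supp R J).
Local Notation delta := (@delta R J).
Local Notation upd := (@upd R J).

Lemma Lin_sum (K : finType) (lam : K -> R) (l : K -> (J -> R) -> R) :
  (forall k, Lin (l k)) -> Lin (fun z => \sum_k lam k * l k z).
Proof.
move=> h a x y; rewrite mulr_sumr -big_split /=; apply: eq_bigr => k _.
by rewrite h mulrDr !mulrA [lam k * a]mulrC.
Qed.

Lemma sum_ge_term (K : finType) (F : K -> R) k0 :
  (forall k, 0 <= F k) -> F k0 <= \sum_k F k.
Proof.
move=> h; rewrite (bigD1 k0) //= lerDl; apply: sumr_ge0 => k _; exact: h.
Qed.

Theorem FM (m : nat) : forall (S : {set J}), #|S| = m ->
  forall (K : finType) (l : K -> (J -> R) -> R) (b : K -> R) (s : K -> bool),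
  (forall k, Lin (l k)) -> (forall k, supp S (l k)) ->
  ~ (exists x, sat l b s x) -> exists y, good l b s y.
Proof.
elim: m => [|m IH] S hS K l b s hL hsupp hinf.
- have S0 := card0_eq hS.
  have l0 : forall k z, l k z = 0.
    move=> k z; rewrite (hsupp k z (fun _ => 0)) ?Lin0 // => j; by rewrite S0.
  have [k hk] : exists k, ~ (if s k then l k (fun _ => 0) < b k
                             else l k (fun _ => 0) <= b k).
    apply/existsNP => H; apply: hinf; exists (fun _ => 0) => k; exact: H.
  exists (fun i => (i == k)%:R); split.
  + by move=> i; rewrite ler0n.
  + by move=> z; apply: big1 => i _; rewrite l0 mulr0.
  + rewrite (eq_bigr (fun i => b i * (i == k)%:R)) => [|i _]; last by rewrite mulrC.
    rewrite sum_delta; move: hk; rewrite l0; case hsk: (s k) => hk.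
    * right; split; first by rewrite leNgt; apply/negP.
      by exists k; rewrite eqxx hsk ltr01.
    * by left; rewrite ltNge; apply/negP.
- have [j0 hj0] : exists j0, j0 \in S.
    by apply/card_gt0P; rewrite hS.
  set S' := S :\ j0.
  have hS' : #|S'| = m.
    by move: hS; rewrite (cardsD1 j0) hj0 add1n => -[].
  set a := fun k => l k (delta j0).
  pose K' := (K + (K * K))%type.
  pose cnd (p q : K) := (0 < a p) && (a q < 0).
  pose lam : K' -> K -> R := fun k' i => match k' with
    | inl k => if a k == 0 then (i == k)%:R else 0
    | inr pq => if cnd pq.1 pq.2 then
                 (- a pq.2) * (i == pq.1)%:R + a pq.1 * (i == pq.2)%:R else 0 end.
  pose ex : K' -> R := fun k' => match k' with
    | inl k => if a k == 0 then 0 else 1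
    | inr pq => if cnd pq.1 pq.2 then 0 else 1 end.
  pose l' k' z := \sum_i lam k' i * l i z.
  pose b' k' := \sum_i lam k' i * b i + ex k'.
  pose s' k' := match k' with
    | inl k => (a k == 0) && s k
    | inr pq => cnd pq.1 pq.2 && (s pq.1 || s pq.2) end.
  have lam_ge0 : forall k' i, 0 <= lam k' i.
    move=> [k|[p q]] i /=; first by case: ifP => _; rewrite ?ler0n.
    rewrite /cnd; case: ifP => // /andP [hp hq].
    by apply: addr_ge0; apply: mulr_ge0; rewrite ?ler0n // ?oppr_ge0 ltW.
  have ex_ge0 : forall k', 0 <= ex k'.
    by move=> [k|[p q]] /=; case: ifP.
  have lam_a : forall k', \sum_i lam k' i * a i = 0.
    move=> [k|[p q]] /=.
      case: eqP => [hk|_]; last by apply: big1 => i _; rewrite mul0r.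
      by rewrite (eq_bigr (fun i => a i * (i == k)%:R)) ?sum_delta // => i _; rewrite mulrC.
    case: (cnd p q); last by apply: big1 => i _; rewrite mul0r.
    rewrite (eq_bigr (fun i => (- a q * a i) * (i == p)%:R + (a p * a i) * (i == q)%:R));
      last by move=> i _; rewrite mulrDl -!mulrA [(_ == p)%:R * _]mulrC [(_ == q)%:R * _]mulrC.
    by rewrite big_split /= !sum_delta mulNr [a q * a p]mulrC addNr.
  have hL' : forall k', Lin (l' k') by move=> k'; apply: Lin_sum.
  have hsupp' : forall k', supp S' (l' k').
    move=> k' z z' hzz.
    have e1 : l' k' z = l' k' (upd z' j0 (z j0)).
      rewrite /l'; apply: eq_bigr => i _; congr (_ * _); apply: hsupp => j hj.
      rewrite /upd; case: eqP => [->//|/eqP hne]; apply: hzz.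
      by rewrite !inE hne.
    by rewrite e1 Lin_upd // [l' k' (delta j0)]lam_a mul0r addr0.
  have hinf' : ~ (exists x, sat l' b' s' x).
    move=> [x hx]; apply: hinf.
    pose sig k := b k - l k x.
    have hpair : forall p q, 0 < a p -> a q < 0 ->
      0 <= - a q * sig p + a p * sig q /\
      ((s p || s q) -> 0 < - a q * sig p + a p * sig q).
      move=> p q hp hq; have := hx (inr (p, q)).
      have hc : cnd p q by rewrite /cnd hp hq.
      rewrite /s' /l' /b' /= hc /=.
      have -> : \sum_i (- a q * (i == p)%:R + a p * (i == q)%:R) * l i x
               = - a q * l p x + a p * l q x.
        rewrite (eq_bigr (fun i => (- a q * l i x) * (i == p)%:R + (a p * l i x) * (i == q)%:R));
          last by move=> i _; rewrite mulrDl -!mulrA [(_ == p)%:R * _]mulrC [(_ == q)%:R * _]mulrC.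
        by rewrite big_split /= !sum_delta.
      have -> : \sum_i (- a q * (i == p)%:R + a p * (i == q)%:R) * b i
               = - a q * b p + a p * b q.
        rewrite (eq_bigr (fun i => (- a q * b i) * (i == p)%:R + (a p * b i) * (i == q)%:R));
          last by move=> i _; rewrite mulrDl -!mulrA [(_ == p)%:R * _]mulrC [(_ == q)%:R * _]mulrC.
        by rewrite big_split /= !sum_delta.
      rewrite addr0 /sig mulrBr mulrBr; case: (s p || s q) => h.
      + by split => [|_]; lra.
      + by split => //; lra.
    have hLU : forall p q, 0 < a p -> a q < 0 ->
       sig q / a q <= sig p / a p /\ ((s p || s q) -> sig q / a q < sig p / a p).
      move=> p q hp hq; have [h1 h2] := hpair p q hp hq.
      have hpos : 0 < a p * - a q by rewrite mulr_gt0 // oppr_gt0.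
      split; first by rewrite -subr_ge0 pair_key // divr_ge0 // ltW.
      by move=> /h2 h3; rewrite -subr_gt0 pair_key // divr_gt0.
    have [d [hdq hdp]] := @choose_t R K (fun p => 0 < a p) (fun q => a q < 0)
        (fun q => sig q / a q) (fun p => sig p / a p) s hLU.
    exists (upd x j0 (x j0 + d)) => k.
    rewrite Lin_upd // -/(a k) addrAC subrr add0r.
    case: (ltgtP (a k) 0) => hak.
    + have [h1 h2] := hdq k hak.
      move: h1 h2; rewrite !ler_ndivrMr // !ltr_ndivrMr // /sig => h1 h2.
      case: (s k) h2 => [/(_ isT)|_]; rewrite mulrC; lra.
    + have [h1 h2] := hdp k hak.
      move: h1 h2; rewrite !ler_pdivlMr // !ltr_pdivlMr // /sig => h1 h2.
      case: (s k) h2 => [/(_ isT)|_]; rewrite mulrC; lra.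
    + have := hx (inl k); rewrite /s' /l' /b' /= hak eqxx /=.
      rewrite mul0r addr0 addr0.
      by rewrite !sum_delta'.
  have [y' [hy'0 hy'l hy'b]] := IH S' hS' K' l' b' s' hL' hsupp' hinf'.
  exists (fun i => \sum_k' y' k' * lam k' i); split.
  + by move=> i; apply: sumr_ge0 => k' _; apply: mulr_ge0.
  + move=> z; rewrite (eq_bigr (fun i => \sum_k' y' k' * lam k' i * l i z));
      last by move=> i _; rewrite mulr_suml.
    rewrite exchange_big /=; rewrite -[RHS](hy'l z); apply: eq_bigr => k' _.
    by rewrite /l' mulr_sumr; apply: eq_bigr => i _; rewrite mulrA.
  + have hyb : \sum_i (\sum_k' y' k' * lam k' i) * b i <= \sum_k' y' k' * b' k'.
      rewrite (eq_bigr (fun i => \sum_k' y' k' * lam k' i * b i));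
        last by move=> i _; rewrite mulr_suml.
      rewrite exchange_big /=; apply: ler_sum => k' _.
      rewrite /b' mulrDr mulr_sumr.
      rewrite (eq_bigr (fun i => y' k' * (lam k' i * b i))); last by move=> i _; rewrite mulrA.
      by rewrite lerDl; apply: mulr_ge0.
    case: hy'b => [hlt|[hle [k' /andP [hsk' hyk']]]].
      by left; apply: le_lt_trans hyb hlt.
    right; split; first exact: le_trans hyb hle.
    have [i [hsi hli]] : exists i, s i /\ 0 < lam k' i.
      move: hsk'; case: k' hyk' => [k|[p q]] hyk' /=.
        by case/andP => /eqP hk hsk; exists k; split => //; rewrite hk !eqxx ltr01.
      rewrite /cnd; case/andP => /andP [hp hq] hs; rewrite hp hq /=.
      have hpq : (p == q) = false.
        by apply/negP => /eqP hpq; move: hp; rewrite hpq => hp; have := lt_trans hq hp; rewrite ltxx.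
      case/orP: hs => hs.
        exists p; split => //; rewrite eqxx hpq mulr0 addr0 mulr1.
        by rewrite oppr_gt0.
      by exists q; split => //; rewrite eqxx eq_sym hpq mulr0 add0r mulr1.
    exists i; rewrite hsi /=.
    have h := @sum_ge_term K' (fun k'' => y' k'' * lam k'' i) k'
               (fun k'' => mulr_ge0 (hy'0 k'') (lam_ge0 k'' i)).
    apply: lt_le_trans h; exact: mulr_gt0.
Qed.
End FMmain.

Lemma sum_unit (R : ringType) (F : unit -> R) : \sum_(i : unit) F i = F tt.
Proof. by rewrite (bigD1 tt) //= big1 ?addr0 // => -[]. Qed.

Section LPsec.
Variable R : realFieldType.
Variable J : finType.
Local Notation Lin := (@Lin R J).

Theorem LP (K : finType) (l : K -> (J -> R) -> R) (b : K -> R)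
  (c : (J -> R) -> R) (v : R) :
  (forall k, Lin (l k)) -> Lin c -> (exists x0, forall k, l k x0 <= b k) ->
  (forall x, (forall k, l k x <= b k) -> c x <= v) ->
  exists y, [/\ forall k, 0 <= y k, forall z, \sum_k y k * l k z = c z &
                \sum_k y k * b k <= v].
Proof.
move=> hL hc [x0 hx0] hv.
pose K' := (K + unit)%type.
pose l' : K' -> (J -> R) -> R := fun k' z =>
  match k' with inl k => l k z | inr _ => - c z end.
pose b' : K' -> R := fun k' => match k' with inl k => b k | inr _ => - v end.
pose s' : K' -> bool := fun k' => match k' with inl _ => false | inr _ => true end.
have hL' : forall k', Lin (l' k').
  move=> [k|_] a x y /=; first exact: hL.
  by rewrite hc mulrN opprD.
have hsupp : forall k', supp [set: J] (l' k').
  move=> k' x x' hx; have -> // : x = x'.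
  by apply: funext => j; apply: hx; rewrite inE.
have hinf : ~ (exists x, sat l' b' s' x).
  move=> [x hx]; have : c x <= v.
    by apply: hv => k; exact: (hx (inl k)).
  by have := hx (inr tt); rewrite /= ltrN2 => h1 h2; have := lt_le_trans h1 h2; rewrite ltxx.
have [y' [hy0 hyl hyb]] := @FM R J #|[set: J]| [set: J] erefl K' l' b' s' hL' hsupp hinf.
pose t := y' (inr tt).
have hl : forall z, \sum_k y' (inl k) * l k z = t * c z.
  move=> z; have := hyl z; rewrite big_sumType /= sum_unit /= mulrN.
  by move/eqP; rewrite subr_eq0 => /eqP.
have hb : \sum_k' y' k' * b' k' = \sum_k y' (inl k) * b k - t * v.
  by rewrite big_sumType /= sum_unit /= mulrN.
have hb0 : \sum_k y' (inl k) * b k - t * v <= 0.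
  by rewrite -hb; case: hyb => [/ltW|[]].
have ht0 : 0 <= t by apply: hy0.
have ht : 0 < t.
  rewrite lt_def ht0 andbT; apply/negP => /eqP t0.
  have h1 : \sum_k y' (inl k) * l k x0 <= \sum_k y' (inl k) * b k.
    by apply: ler_sum => k _; apply: ler_wpM2l => //; apply: hy0.
  rewrite hl t0 mul0r in h1.
  case: hyb => [|[_ [[k|[]] /andP [//]]]]; last by rewrite -/t t0 ltxx.
  by rewrite hb t0 mul0r subr0 => h2; have := le_lt_trans h1 h2; rewrite ltxx.
exists (fun k => y' (inl k) / t); split.
- by move=> k; apply: divr_ge0 => //; apply: hy0.
- move=> z; rewrite (eq_bigr (fun k => (y' (inl k) * l k z) / t)); last first.
    by move=> k _; rewrite mulrAC.
  by rewrite -mulr_suml hl mulrAC divff ?mul1r // gt_eqF.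
- rewrite (eq_bigr (fun k => (y' (inl k) * b k) / t)); last first.
    by move=> k _; rewrite mulrAC.
  rewrite -mulr_suml ler_pdivrMr // mulrC; move: hb0; rewrite subr_le0 //.
Qed.
End LPsec.

Section LinComb.
Variable R : realFieldType.
Variable J : finType.
Local Notation Lin := (@Lin R J).

Lemma Lin_proj j : Lin (fun x => x j).
Proof. by []. Qed.

Lemma Lin_scale (c : R) f : Lin f -> Lin (fun x => c * f x).
Proof. by move=> h a x y; rewrite h mulrDr mulrCA. Qed.

Lemma Lin_add f g : Lin f -> Lin g -> Lin (fun x => f x + g x).
Proof. by move=> hf hg a x y; rewrite hf hg mulrDr; ring. Qed.

Lemma Lin_sub f g : Lin f -> Lin g -> Lin (fun x => f x - g x).
Proof. by move=> hf hg a x y; rewrite hf hg mulrBr; ring. Qed.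

Lemma Lin_sumf (K : finType) (F : K -> (J -> R) -> R) :
  (forall k, Lin (F k)) -> Lin (fun x => \sum_k F k x).
Proof.
move=> h a x y; rewrite mulr_sumr -big_split /=; apply: eq_bigr => k _; exact: h.
Qed.

Lemma Lin_zero : Lin (fun _ => 0).
Proof. by move=> a x y; rewrite mulr0 addr0. Qed.

End LinComb.

Lemma sum_pair (R : ringType) (I1 I2 : finType) (F : I1 * I2 -> R) :
  \sum_p F p = \sum_i \sum_j F (i, j).
Proof.
rewrite (pair_bigA _ (fun i j => F (i, j))); by apply: eq_bigr => -[].
Qed.

Lemma sum_pairb (R : ringType) (I : finType) (F : I * bool -> R) :
  \sum_p F p = \sum_i (F (i, true) + F (i, false)).
Proof. by rewrite sum_pair; apply: eq_bigr => i _; rewrite big_bool. Qed.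

Section Main.
Variables (R : realType) (V : finType) (e : rel V) (w : V -> V -> R) (n : nat)
  (C : 'I_n -> V -> R) (Sl Su : 'I_n -> nat) (gamma : \bar R).
Hypotheses (esym : forall x y, e x y = e y x) (wsym : forall x y, w x y = w y x)
  (wpos : forall x y, e x y -> 0 < w x y) (w0 : forall x y, ~~ e x y -> w x y = 0)
  (hSl : forall i, (Sl i <= Su i)%N)
  (hV : (\sum_(i < n) Sl i <= #|V| <= \sum_(i < n) Su i)%N)
  (hg : (0 <= gamma)%E).

Lemma divsum (u : V -> R) (q : V -> V -> R) :
  \sum_x u x * divw w q x = 2^-1 * \sum_x \sum_y w x y * q x y * (u x - u y).
Proof.
transitivity (2^-1 * (\sum_x \sum_y w x y * q x y * u x -
                      \sum_x \sum_y w x y * q y x * u x)).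
  rewrite -sumrB mulr_sumr; apply: eq_bigr => x _; rewrite /divw.
  rewrite -sumrB mulr_sumr mulr_sumr mulr_sumr; apply: eq_bigr => y _; ring.
have -> : \sum_x \sum_y w x y * q y x * u x = \sum_x \sum_y w x y * q x y * u y.
  rewrite exchange_big /=; apply: eq_bigr => x _; apply: eq_bigr => y _.
  by rewrite wsym.
congr (_ * _); rewrite -sumrB; apply: eq_bigr => x _; rewrite -sumrB.
by apply: eq_bigr => y _; ring.
Qed.

Lemma div_le_TV (u : V -> R) (q : V -> V -> R) :
  (forall x y, e x y -> `|q x y| <= 1) -> \sum_x u x * divw w q x <= TVw w u.
Proof.
move=> hq; rewrite divsum /TVw; apply: ler_wpM2l; first by rewrite invr_ge0 ler0n.
apply: ler_sum => x _; apply: ler_sum => y _.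
case: (boolP (e x y)) => hxy; last by rewrite w0 // !mul0r.
rewrite -mulrA; apply: ler_wpM2l; first exact: ltW (wpos hxy).
rewrite distrC; apply: le_trans (ler_norm _) _.
rewrite normrM; apply: ler_piMl => //; exact: hq.
Qed.

Lemma div_sign_TV (u : V -> R) :
  \sum_x u x * divw w (fun x y => Num.sg (u x - u y)) x = TVw w u.
Proof.
rewrite divsum /TVw; congr (_ * _); apply: eq_bigr => x _; apply: eq_bigr => y _.
by rewrite -mulrA -normrEsg distrC.
Qed.

Definition gfin : R := if gamma is +oo%E then 0 else 1.
Definition gv : R := fine gamma.

Lemma gv_ge0 : 0 <= gv.
Proof. by move: hg; rewrite /gv; case: gamma => // g; rewrite lee_fin. Qed.

Lemma rho_okE r : rho_ok gamma r <-> 0 <= r /\ gfin * r <= gv.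
Proof.
rewrite /rho_ok /gfin /gv; move: hg; case: gamma => [g||] //= _.
  by rewrite lee_fin mul1r.
by rewrite mul0r lexx leey.
Qed.

Definition penf (i : 'I_n) (t : R) : R :=
  match gamma with
  | EFin g => if 0 < g then Pgam g (Sl i) (Su i) t else 0
  | _ => 0 end.

Lemma relaxed_objE u :
  relaxed_obj w C Sl Su gamma u = (relaxed_energy w C u + \sum_i penf i (unorm (u i)))%:E.
Proof.
rewrite /relaxed_obj /penf; case: gamma => [g||] //.
  by case: ifP => // _; rewrite big1 ?addr0.
all: by rewrite big1 ?addr0.
Qed.

Lemma SlSu i : (Sl i)%:R <= (Su i)%:R :> R.
Proof. by rewrite ler_nat. Qed.

Lemma pen_upper i (r1 r2 t : R) : rho_ok gamma r1 -> rho_ok gamma r2 ->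
  (gamma = +oo%E -> (Sl i)%:R <= t <= (Su i)%:R) ->
  r1 * ((Sl i)%:R - t) + r2 * (t - (Su i)%:R) <= penf i t.
Proof.
rewrite !rho_okE /penf /gfin /gv => -[h1 h1'] [h2 h2'] hsz.
have hs := SlSu i.
move: hg h1' h2' hsz; case: gamma => [g||] //= hg0 h1' h2' hsz.
- rewrite !mul1r in h1' h2'.
  case: ifP => hgp.
    rewrite /Pgam; case: ifP => hu.
      have : (Sl i)%:R - t <= 0 by move: hu; rewrite -/(_ < _) => hu; lra.
      move=> hneg; have := mulr_ge0_le0 h1 hneg; nra.
    case: ifP => hl; last by move: hu hl => /negbT; rewrite -leNgt => hu /negbT; rewrite -leNgt => hl; nra.
    move: hu => /negbT; rewrite -leNgt => hu; nra.
  have g0 : g = 0 by move: hgp hg0 => /negbT; rewrite lee_fin -leNgt => ??; apply/eqP; rewrite eq_le; apply/andP.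
  subst g; have -> : r1 = 0 by apply/eqP; rewrite eq_le h1 h1'.
  have -> : r2 = 0 by apply/eqP; rewrite eq_le h2 h2'.
  by rewrite !mul0r addr0.
- have [ha hb] := andP (hsz erefl); nra.
Qed.

Lemma pen_lower i (t Y1 Y2 L1 L2 : R) : 0 <= Y1 -> 0 <= Y2 -> 0 <= L1 -> 0 <= L2 ->
  t - L1 + gfin * Y1 = (Sl i)%:R -> - t - L2 + gfin * Y2 = - (Su i)%:R ->
  penf i t <= gv * Y1 + gv * Y2 /\ (gamma = +oo%E -> (Sl i)%:R <= t <= (Su i)%:R).
Proof.
move=> hY1 hY2 hL1 hL2; rewrite /penf /gfin /gv.
have hs := SlSu i.
move: hg; case: gamma => [g||] //= hg0 e1 e2.
- rewrite !mul1r in e1 e2; split => //.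
  case: ifP => hgp; last by apply: addr_ge0; apply: mulr_ge0 => //; rewrite -lee_fin.
  rewrite /Pgam; case: ifP => hu; first nra.
  case: ifP => hl; first nra.
  by apply: addr_ge0; apply: mulr_ge0 => //; apply: ltW.
- rewrite !mul0r addr0 in e1 e2; split; first by rewrite mul0r mul0r addr0.
  by move=> _; apply/andP; split; lra.
Qed.

Lemma lagr_bound (u : 'I_n -> V -> R) ps p q r1 r2 :
  relaxed_feasible Sl Su gamma u -> dual_box e C gamma p q r1 r2 ->
  lagrangian w Sl Su u ps p q r1 r2 <=
  relaxed_energy w C u + \sum_i penf i (unorm (u i)).
Proof.
move=> [[hu01 hu1] hsz] hbox.
have E1 : forall i, \sum_x u i x * (divw w (q i) x - ps x + p i x + r2 i - r1 i)
  = \sum_x u i x * divw w (q i) x + \sum_x u i x * p i x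
    + (r2 i - r1 i) * unorm (u i) - \sum_x u i x * ps x.
  move=> i; rewrite /unorm mulr_sumr -!big_split -sumrB /=.
  by apply: eq_bigr => x _; ring.
have E2 : \sum_i \sum_x u i x * ps x = \sum_x ps x.
  rewrite exchange_big /=; apply: eq_bigr => x _.
  by rewrite -mulr_suml hu1 mul1r.
have -> : lagrangian w Sl Su u ps p q r1 r2 =
   \sum_i (\sum_x u i x * divw w (q i) x + \sum_x u i x * p i x +
          (r1 i * ((Sl i)%:R - unorm (u i)) + r2 i * (unorm (u i) - (Su i)%:R))).
  rewrite /lagrangian /flow_obj -E2 -!big_split /=; apply: eq_bigr => i _.
  rewrite E1; ring.
rewrite /relaxed_energy -!big_split /=.
apply: ler_sum => i _.
have [hq [hp [hr1 hr2]]] := hbox i.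
have h1 := @div_le_TV (u i) (q i) hq.
have h2 : \sum_x u i x * p i x <= \sum_x C i x * u i x.
  apply: ler_sum => x _; rewrite mulrC; apply: ler_wpM2r; first by case/andP: (hu01 i x).
  exact: hp.
have h3 := @pen_upper i _ _ (unorm (u i)) hr1 hr2 (fun hgi => hsz hgi i).
lra.
Qed.

Lemma pd_le_relaxed u : relaxed_feasible Sl Su gamma u ->
  (pd_inner w e C Sl Su gamma u <= relaxed_obj w C Sl Su gamma u)%E.
Proof.
move=> hu; rewrite relaxed_objE; apply: ge_ereal_sup => z [ps [p [q [r1 [r2 [hb ->]]]]]].
by rewrite lee_fin; apply: lagr_bound.
Qed.

Lemma maxflow_le_pd u : (maxflow_value w e C Sl Su gamma <= pd_inner w e C Sl Su gamma u)%E.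
Proof.
apply: ge_ereal_sup => z [ps [p [q [r1 [r2 [hb heq ->]]]]]].
apply: ereal_sup_ubound; exists ps, p, q, r1, r2; split => //.
congr (_%:E); rewrite /lagrangian big1 ?addr0 // => i _; apply: big1 => x _.
rewrite heq; have -> : r1 i - r2 i + r2 i - r1 i = 0 by ring.
by rewrite mulr0.
Qed.


Local Notation JJ := ((((V + ('I_n * V)) + ('I_n * V * V)) + 'I_n) + 'I_n)%type.
Local Notation KK := (((('I_n * V * V * bool) + ('I_n * V)) + ('I_n * bool * bool))
                      + ('I_n * V * bool))%type.

Definition ps_of (x : JJ -> R) (v : V) : R := x (inl (inl (inl (inl v)))).
Definition p_of (x : JJ -> R) (i : 'I_n) (v : V) : R := x (inl (inl (inl (inr (i, v))))).
Definition q_of (x : JJ -> R) (i : 'I_n) (a b : V) : R := x (inl (inl (inr (i, a, b)))).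
Definition r1_of (x : JJ -> R) (i : 'I_n) : R := x (inl (inr i)).
Definition r2_of (x : JJ -> R) (i : 'I_n) : R := x (inr i).

Definition sgn (b : bool) : R := if b then 1 else -1.

Definition Lfun (x : JJ -> R) i v : R :=
  divw w (q_of x i) v - ps_of x v + p_of x i v - r1_of x i + r2_of x i.

Definition lK (k : KK) (x : JJ -> R) : R :=
  match k with
  | inl (inl (inl kq)) =>
      sgn kq.2 * ((e kq.1.1.2 kq.1.2)%:R * q_of x kq.1.1.1 kq.1.1.2 kq.1.2)
  | inl (inl (inr kp)) => p_of x kp.1 kp.2
  | inl (inr kr) =>
      (if kr.2 then gfin else -1) * (if kr.1.2 then r1_of x kr.1.1 else r2_of x kr.1.1)
  | inr ke => sgn ke.2 * Lfun x ke.1.1 ke.1.2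
  end.

Definition bK (k : KK) : R :=
  match k with
  | inl (inl (inl _)) => 1
  | inl (inl (inr kp)) => C kp.1 kp.2
  | inl (inr kr) => if kr.2 then gv else 0
  | inr _ => 0
  end.

Definition cJ (x : JJ -> R) : R := flow_obj Sl Su (ps_of x) (r1_of x) (r2_of x).

Lemma Lin_divw i v : Lin (fun x : JJ -> R => divw w (q_of x i) v).
Proof.
rewrite /divw /q_of; apply: Lin_scale; apply: Lin_sumf => y.
apply: Lin_scale; apply: Lin_sub; exact: Lin_proj.
Qed.

Lemma Lin_Lfun i v : Lin (fun x => Lfun x i v).
Proof.
rewrite /Lfun; apply: Lin_add; last exact: Lin_proj.
apply: Lin_sub; last exact: Lin_proj.
apply: Lin_add; last exact: Lin_proj.
apply: Lin_sub; last exact: Lin_proj.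
exact: Lin_divw.
Qed.

Lemma Lin_lK k : Lin (lK k).
Proof.
case: k => [[[kq|kp]|kr]|ke] /=.
- apply: Lin_scale; apply: Lin_scale; exact: Lin_proj.
- exact: Lin_proj.
- apply: Lin_scale; case: (kr.1.2); exact: Lin_proj.
- apply: Lin_scale; exact: Lin_Lfun.
Qed.

Lemma Lin_cJ : Lin cJ.
Proof.
rewrite /cJ /flow_obj; apply: Lin_add.
  apply: Lin_sumf => v; exact: Lin_proj.
apply: Lin_sumf => i; apply: Lin_sub.
  by move=> a x y; rewrite /r1_of; ring.
by move=> a x y; rewrite /r2_of; ring.
Qed.

Lemma lp_feas (x : JJ -> R) : (forall k, lK k x <= bK k) ->
  dual_box e C gamma (p_of x) (q_of x) (r1_of x) (r2_of x) /\
  (forall i v, divw w (q_of x i) v - ps_of x v + p_of x i v = r1_of x i - r2_of x i).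
Proof.
move=> h; split.
- move=> i; split; [|split; [|split]].
  + move=> a b hab; have h1 := h (inl (inl (inl (i, a, b, true)))).
    have h2 := h (inl (inl (inl (i, a, b, false)))).
    move: h1 h2; rewrite /= hab /sgn /= !mul1r => h1 h2.
    by rewrite ler_norml h1 andbT -lerNl; move: h2; rewrite mulN1r.
  + by move=> v; exact: (h (inl (inl (inr (i, v))))).
  + apply/rho_okE; split.
      by have := h (inl (inr (i, true, false))); rewrite /= mulN1r oppr_le0.
    exact: (h (inl (inr (i, true, true)))).
  + apply/rho_okE; split.
      by have := h (inl (inr (i, false, false))); rewrite /= mulN1r oppr_le0.
    exact: (h (inl (inr (i, false, true)))).
- move=> i v; have h1 := h (inr (i, v, true)); have h2 := h (inr (i, v, false)).
  move: h1 h2; rewrite /= /sgn mul1r mulN1r oppr_le0 /Lfun => h1 h2.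
  have : divw w (q_of x i) v - ps_of x v + p_of x i v - r1_of x i + r2_of x i = 0.
    by apply/eqP; rewrite eq_le h1 h2.
  move=> h3; lra.
Qed.

Lemma divw0 v : divw w (fun _ _ => 0) v = 0.
Proof. by rewrite /divw big1 ?mulr0 // => y _; rewrite subrr mulr0. Qed.

Definition ps0 (v : V) : R := - \sum_i `|C i v|.

Definition x0 : JJ -> R := fun j =>
  match j with
  | inl (inl (inl (inl v))) => ps0 v
  | inl (inl (inl (inr iv))) => ps0 iv.2
  | _ => 0 end.

Lemma x0_feas k : lK k x0 <= bK k.
Proof.
case: k => [[[kq|kp]|kr]|ke] /=.
- by rewrite /q_of /= !mulr0 ler01.
- rewrite /p_of /ps0 /=; apply: le_trans (_ : - `|C kp.1 kp.2| <= _).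
    rewrite lerN2; exact: (@sum_ge_term R _ (fun i => `|C i kp.2|) kp.1 (fun _ => normr_ge0 _)).
  by rewrite lerNl -normrN; exact: ler_norm.
- by rewrite /r1_of /r2_of /=; case: (kr.1.2); rewrite mulr0; case: (kr.2); rewrite ?gv_ge0.
- rewrite /Lfun /q_of /ps_of /p_of /r1_of /r2_of /=.
  by rewrite divw0 sub0r addNr subr0 addr0 mulr0.
Qed.


Lemma sum_ind1 (v0 : V) : \sum_(v : V) (v == v0)%:R = 1 :> R.
Proof. by rewrite (bigD1 v0) //= eqxx big1 ?addr0 // => v /negbTE ->. Qed.

Lemma farkas_u (v : R) :
  (forall ps p q r1 r2, dual_box e C gamma p q r1 r2 ->
     (forall i x, divw w (q i) x - ps x + p i x = r1 i - r2 i) ->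
     flow_obj Sl Su ps r1 r2 <= v) ->
  exists u, relaxed_feasible Sl Su gamma u /\
            relaxed_energy w C u + \sum_i penf i (unorm (u i)) <= v.
Proof.
move=> hv.
have [y [hy0 hyl hyb]] := @LP R JJ KK lK bK cJ v Lin_lK Lin_cJ (ex_intro _ x0 x0_feas)
  (fun x hx => let: conj h1 h2 := lp_feas hx in hv _ _ _ _ _ h1 h2).
pose U (iv : 'I_n * V) := y (inr (iv, false)) - y (inr (iv, true)).
have hsplit : forall z, \sum_k y k * lK k z =
   \sum_(kq : 'I_n * V * V * bool) y (inl (inl (inl kq))) * lK (inl (inl (inl kq))) z
 + \sum_(kp : 'I_n * V) y (inl (inl (inr kp))) * lK (inl (inl (inr kp))) z
 + \sum_(kr : 'I_n * bool * bool) y (inl (inr kr)) * lK (inl (inr kr)) z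
 - \sum_(iv : 'I_n * V) U iv * Lfun z iv.1 iv.2.
  move=> z; rewrite !big_sumType; congr (_ + _).
  rewrite sum_pairb -sumrN; apply: eq_bigr => iv _ /=; rewrite /U /sgn; ring.
have Qz : forall z, (forall i a b, q_of z i a b = 0) ->
   \sum_(kq : 'I_n * V * V * bool) y (inl (inl (inl kq))) * lK (inl (inl (inl kq))) z = 0.
  by move=> z hz; apply: big1 => kq _ /=; rewrite hz !mulr0.
have Pz : forall z, (forall i v, p_of z i v = 0) ->
   \sum_(kp : 'I_n * V) y (inl (inl (inr kp))) * lK (inl (inl (inr kp))) z = 0.
  by move=> z hz; apply: big1 => kp _ /=; rewrite hz !mulr0.
have Rz : forall z, (forall i, r1_of z i = 0) -> (forall i, r2_of z i = 0) ->
   \sum_(kr : 'I_n * bool * bool) y (inl (inr kr)) * lK (inl (inr kr)) z = 0.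
  by move=> z h1 h2; apply: big1 => kr _ /=; case: (kr.1.2); rewrite ?h1 ?h2 !mulr0.
have hsum1 : forall v0, \sum_i U (i, v0) = 1.
  move=> v0; pose z : JJ -> R := fun j => match j with
    | inl (inl (inl (inl v))) => (v == v0)%:R | _ => 0 end.
  have := hyl z; rewrite hsplit Qz // Pz // Rz // !add0r.
  have -> : cJ z = 1.
    rewrite /cJ /flow_obj /ps_of /r1_of /r2_of /= sum_ind1 big1 ?addr0 //.
    by move=> i _; rewrite !mul0r subrr.
  rewrite sum_pair -sumrN => <-; apply: eq_bigr => i _.
  rewrite (bigD1 v0) //= big1 ?addr0.
    rewrite /Lfun /q_of /ps_of /p_of /r1_of /r2_of /= divw0 eqxx /=; ring.
  move=> v' hv'; rewrite /Lfun /q_of /ps_of /p_of /r1_of /r2_of /= divw0 (negbTE hv') /=; ring.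
have hP : forall iv0, y (inl (inl (inr iv0))) = U iv0.
  move=> iv0; pose z : JJ -> R := fun j => match j with
    | inl (inl (inl (inr iv))) => (iv == iv0)%:R | _ => 0 end.
  have := hyl z; rewrite hsplit Qz // Rz // add0r addr0.
  have -> : cJ z = 0.
    rewrite /cJ /flow_obj /ps_of /r1_of /r2_of /= big1 ?add0r; last by [].
    by apply: big1 => i _; rewrite !mul0r subrr.
  rewrite (eq_bigr (fun kp => y (inl (inl (inr kp))) * (kp == iv0)%:R)); last first.
    by move=> [i v'] _.
  rewrite [X in _ - X](eq_bigr (fun iv => U iv * (iv == iv0)%:R)); last first.
    move=> [i v'] _; rewrite /Lfun /q_of /ps_of /p_of /r1_of /r2_of /= divw0; ring.
  by rewrite !sum_delta => /eqP; rewrite subr_eq0 => /eqP.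
have hR1 : forall i0, \sum_v U (i0, v) - y (inl (inr (i0, true, false)))
                     + gfin * y (inl (inr (i0, true, true))) = (Sl i0)%:R.
  move=> i0; pose z : JJ -> R := fun j => match j with
    | inl (inr i) => (i == i0)%:R | _ => 0 end.
  have := hyl z; rewrite hsplit Qz // Pz // !add0r.
  have -> : cJ z = (Sl i0)%:R.
    rewrite /cJ /flow_obj /ps_of /r1_of /r2_of /= big1 ?add0r //.
    rewrite (eq_bigr (fun i => (Sl i)%:R * (i == i0)%:R)) ?sum_delta // => i _.
    by rewrite mul0r subr0 mulrC.
  rewrite sum_pairb sum_pairb /=.
  rewrite (eq_bigr (fun i => (gfin * y (inl (inr (i, true, true)))
                             - y (inl (inr (i, true, false)))) * (i == i0)%:R));
    last by move=> i _; rewrite /r1_of /r2_of /=; ring.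
  rewrite sum_delta sum_pair.
  rewrite (eq_bigr (fun i => (i == i0)%:R * - \sum_v U (i, v))); last first.
    move=> i _; rewrite mulrN mulr_sumr -sumrN; apply: eq_bigr => v' _.
    rewrite /Lfun /q_of /ps_of /p_of /r1_of /r2_of /= divw0; ring.
  by rewrite sum_delta' => <-; ring.
have hR2 : forall i0, - \sum_v U (i0, v) - y (inl (inr (i0, false, false)))
                     + gfin * y (inl (inr (i0, false, true))) = - (Su i0)%:R.
  move=> i0; pose z : JJ -> R := fun j => match j with
    | inr i => (i == i0)%:R | _ => 0 end.
  have := hyl z; rewrite hsplit Qz // Pz // !add0r.
  have -> : cJ z = - (Su i0)%:R.
    rewrite /cJ /flow_obj /ps_of /r1_of /r2_of /= big1 ?add0r //.
    rewrite (eq_bigr (fun i => - (Su i)%:R * (i == i0)%:R)) ?sum_delta // => i _.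
    by rewrite /r2_of /=; ring.
  rewrite sum_pairb sum_pairb /=.
  rewrite (eq_bigr (fun i => (gfin * y (inl (inr (i, false, true)))
                             - y (inl (inr (i, false, false)))) * (i == i0)%:R));
    last by move=> i _; rewrite /r1_of /r2_of /=; ring.
  rewrite sum_delta sum_pair.
  rewrite (eq_bigr (fun i => (i == i0)%:R * \sum_v U (i, v))); last first.
    move=> i _; rewrite mulr_sumr; apply: eq_bigr => v' _.
    rewrite /Lfun /q_of /ps_of /p_of /r1_of /r2_of /= divw0; ring.
  by rewrite sum_delta' => <-; ring.
pose u (i : 'I_n) (x : V) := U (i, x).
have hTV : \sum_i TVw w (u i) <= \sum_(kq : 'I_n * V * V * bool) y (inl (inl (inl kq))) * 1.
  pose z : JJ -> R := fun j => match j with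
    | inl (inl (inr iab)) => Num.sg (u iab.1.1 iab.1.2 - u iab.1.1 iab.2) | _ => 0 end.
  have := hyl z; rewrite hsplit Pz // Rz // addr0.
  have -> : cJ z = 0.
    rewrite /cJ /flow_obj /ps_of /r1_of /r2_of /= big1 ?add0r; last by [].
    by apply: big1 => i _; rewrite !mul0r subrr.
  have -> : \sum_(iv : 'I_n * V) U iv * Lfun z iv.1 iv.2 = \sum_i TVw w (u i).
    rewrite sum_pair; apply: eq_bigr => i _; rewrite -div_sign_TV.
    apply: eq_bigr => x _; rewrite /Lfun /q_of /ps_of /p_of /r1_of /r2_of /=; congr (_ * _).
    by rewrite !subr0 !addr0.
  move=> /eqP; rewrite subr_eq0 => /eqP <-; rewrite addr0.
  apply: ler_sum => kq _; apply: ler_wpM2l; first exact: hy0.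
  apply: le_trans (ler_norm _) _; rewrite /= /q_of /= !normrM normr_sg.
  have h1 : `|sgn kq.2| = 1 by case: (kq.2); rewrite /sgn ?normrN normr1.
  rewrite h1 mul1r; case: (e _ _); case: (_ != 0); by rewrite ?normr1 ?normr0 ?mul1r ?mul0r ?ler01.
exists u; split.
- have hu0 : forall i x, 0 <= u i x by move=> i x; rewrite /u -hP; exact: hy0.
  split; first split.
  + move=> i x; rewrite hu0 /=; rewrite -(hsum1 x).
    exact: (@sum_ge_term R _ (fun j => U (j, x)) i (fun j => hu0 j x)).
  + exact: hsum1.
  + move=> hgi i; have [_ h] := @pen_lower i (unorm (u i)) (y (inl (inr (i, true, true))))
       (y (inl (inr (i, false, true)))) (y (inl (inr (i, true, false))))
       (y (inl (inr (i, false, false)))) (hy0 _) (hy0 _) (hy0 _) (hy0 _) (hR1 i) (hR2 i).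
    exact: h.
- apply: le_trans hyb.
  rewrite !big_sumType /=.
  have E0 : \sum_(ke : 'I_n * V * bool) y (inr ke) * 0 = 0.
    by apply: big1 => ? _; rewrite mulr0.
  have ER : \sum_(kr : 'I_n * bool * bool) y (inl (inr kr)) * (if kr.2 then gv else 0)
     = \sum_i (y (inl (inr (i, true, true))) * gv + y (inl (inr (i, false, true))) * gv).
    rewrite sum_pairb sum_pairb; apply: eq_bigr => i _ /=; ring.
  rewrite E0 ER addr0.
  have hC : \sum_i \sum_x C i x * u i x =
            \sum_(kp : 'I_n * V) y (inl (inl (inr kp))) * C kp.1 kp.2.
    rewrite sum_pair; apply: eq_bigr => i _; apply: eq_bigr => x _.
    by rewrite hP mulrC.
  have hpen : \sum_i penf i (unorm (u i)) <=
     \sum_i (y (inl (inr (i, true, true))) * gv + y (inl (inr (i, false, true))) * gv).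
    apply: ler_sum => i _; rewrite [_ * gv]mulrC [y _ * gv]mulrC.
    have [h _] := @pen_lower i (unorm (u i)) (y (inl (inr (i, true, true))))
       (y (inl (inr (i, false, true)))) (y (inl (inr (i, true, false))))
       (y (inl (inr (i, false, false)))) (hy0 _) (hy0 _) (hy0 _) (hy0 _) (hR1 i) (hR2 i).
    exact: h.
  rewrite /relaxed_energy hC; lra.
Qed.


Lemma exists_feasible : exists u : 'I_n -> V -> R, relaxed_feasible Sl Su gamma u.
Proof.
pose N : R := #|V|%:R.
pose A : R := \sum_i (Sl i)%:R.
pose B : R := \sum_i (Su i)%:R.
have [hA hB] : A <= N /\ N <= B.
  case/andP: hV => h1 h2; rewrite /A /B /N -!natr_sum !ler_nat; split => //.
have hAB : A <= B by apply: le_trans hB.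
pose lam : R := (N - A) / (B - A).
have lam0 : 0 <= lam by apply: divr_ge0; rewrite subr_ge0.
have lam1 : lam <= 1.
  case: (eqVneq (B - A) 0) => hBA; first by rewrite /lam hBA invr0 mulr0 ler01.
  have hpos : 0 < B - A by rewrite lt_def hBA subr_ge0.
  by rewrite /lam ler_pdivrMr // mul1r lerD2r.
pose a (i : 'I_n) : R := (Sl i)%:R + lam * ((Su i)%:R - (Sl i)%:R).
have haS : forall i, (Sl i)%:R <= a i <= (Su i)%:R.
  move=> i; have := SlSu i => hs; apply/andP; split.
    by rewrite lerDl; apply: mulr_ge0; rewrite // subr_ge0.
  have : lam * ((Su i)%:R - (Sl i)%:R) <= 1 * ((Su i)%:R - (Sl i)%:R).
    by apply: ler_wpM2r; rewrite // subr_ge0.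
  rewrite /a; lra.
have hsa : \sum_i a i = A + lam * (B - A).
  by rewrite big_split /= -mulr_sumr sumrB.
have hsaN : 0 < N -> \sum_i a i = N.
  move=> hN; rewrite hsa; case: (eqVneq (B - A) 0) => hBA.
    rewrite hBA mulr0 addr0; apply/eqP; rewrite eq_le hA /=.
    by move/eqP: hBA; rewrite subr_eq0 => /eqP <-.
  by rewrite /lam divfK // addrC subrK.
pose u (i : 'I_n) (x : V) : R := a i / N.
have Npos : forall x : V, 0 < N.
  by move=> x; rewrite /N ltr0n; apply/card_gt0P; exists x.
have hsum : forall x, \sum_i u i x = 1.
  by move=> x; have hN := Npos x; rewrite -mulr_suml hsaN // divff // gt_eqF.
have hu0 : forall i x, 0 <= u i x.
  move=> i x; apply: divr_ge0; last exact: ler0n.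
  by case/andP: (haS i) => h _; apply: le_trans h.
exists u; split; first split.
- move=> i x; rewrite hu0 /= -(hsum x).
  exact: (@sum_ge_term R _ (fun j => u j x) i (fun j => hu0 j x)).
- exact: hsum.
- move=> _ i; rewrite /unorm.
  case: (posnP #|V|) => hV0.
    have -> : \sum_x u i x = 0.
      by apply: big1 => x _; have := Npos x; rewrite /N hV0 ltxx.
    have : (Sl i <= \sum_j Sl j)%N by rewrite (bigD1 i) //= leq_addr.
    case/andP: hV; rewrite hV0 => h1 _ h2.
    have -> : Sl i = 0%N by apply/eqP; rewrite -leqn0; apply: leq_trans h2 h1.
    by rewrite lexx ler0n.
  have -> : \sum_x u i x = a i.
    rewrite /u sumr_const -mulr_natl -/N mulrC divfK //.
    by rewrite gt_eqF // /N ltr0n.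
  exact: haS.
Qed.

Lemma main_result :
  [/\ maxflow_value w e C Sl Su gamma = primaldual_value w e C Sl Su gamma,
      primaldual_value w e C Sl Su gamma = relaxed_value w C Sl Su gamma,
      (exists u : 'I_n -> V -> R,
         pd_inner w e C Sl Su gamma u = primaldual_value w e C Sl Su gamma) &
      (exists u : 'I_n -> V -> R, relaxed_feasible Sl Su gamma u /\
         relaxed_obj w C Sl Su gamma u = relaxed_value w C Sl Su gamma)].
Proof.
have [u1 hu1] := exists_feasible.
set M := maxflow_value w e C Sl Su gamma.
have hMup : (M <= relaxed_obj w C Sl Su gamma u1)%E.
  exact: le_trans (maxflow_le_pd u1) (pd_le_relaxed hu1).
have [hb0 he0] := lp_feas (fun k => x0_feas k).
have hMlo : ((cJ x0)%:E <= M)%E.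
  by apply: ereal_sup_ubound; exists (ps_of x0), (p_of x0), (q_of x0), (r1_of x0), (r2_of x0).
have [r hr] : exists r : R, M = r%:E.
  move: hMup hMlo; rewrite relaxed_objE; case: M => [r _ _|//|//].
  by exists r.
have hv : forall ps p q r1 r2, dual_box e C gamma p q r1 r2 ->
    (forall i x, divw w (q i) x - ps x + p i x = r1 i - r2 i) ->
    flow_obj Sl Su ps r1 r2 <= r.
  move=> ps p q r1 r2 hb he; rewrite -lee_fin -hr.
  by apply: ereal_sup_ubound; exists ps, p, q, r1, r2.
have [u [hu hur]] := farkas_u hv.
have hobj : (relaxed_obj w C Sl Su gamma u <= M)%E by rewrite relaxed_objE hr lee_fin.
have hMPD : M = primaldual_value w e C Sl Su gamma.
  apply/eqP; rewrite eq_le; apply/andP; split.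
    by apply: le_ereal_inf_tmp => z [u' _ <-]; exact: maxflow_le_pd.
  apply: le_trans (ereal_inf_lbound _) (le_trans (pd_le_relaxed hu) hobj).
  by exists u.
have hMRV : M = relaxed_value w C Sl Su gamma.
  apply/eqP; rewrite eq_le; apply/andP; split.
    apply: le_ereal_inf_tmp => z [u' hu' <-].
    exact: le_trans (maxflow_le_pd u') (pd_le_relaxed hu').
  apply: le_trans (ereal_inf_lbound _) hobj.
  by exists u.
split.
- exact: hMPD.
- by rewrite -hMPD.
- exists u; apply/eqP; rewrite eq_le; apply/andP; split.
    by rewrite -hMPD; apply: le_trans (pd_le_relaxed hu) hobj.
  by apply: ereal_inf_lbound; exists u.
- exists u; split => //; apply/eqP; rewrite eq_le; apply/andP; split.
    by rewrite -hMRV.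
  by apply: ereal_inf_lbound; exists u.
Qed.

End Main.

Unset Implicit Arguments.

Theorem theorem4 (R : realType) (V : finType) (e : rel V) (w : V -> V -> R)
  (n : nat) (C : 'I_n -> V -> R) (Sl Su : 'I_n -> nat) (gamma : \bar R) :
  (forall x y, e x y = e y x) ->
  (forall x y, w x y = w y x) ->
  (forall x y, e x y -> 0 < w x y) ->
  (forall x y, ~~ e x y -> w x y = 0) ->
  (2 <= n)%N ->
  (forall i, (Sl i <= Su i)%N) ->
  (\sum_(i < n) Sl i <= #|V| <= \sum_(i < n) Su i)%N ->
  (0 <= gamma)%E ->
  [/\ maxflow_value w e C Sl Su gamma = primaldual_value w e C Sl Su gamma,
      primaldual_value w e C Sl Su gamma = relaxed_value w C Sl Su gamma,
      (exists u : 'I_n -> V -> R,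
         pd_inner w e C Sl Su gamma u = primaldual_value w e C Sl Su gamma) &
      (exists u : 'I_n -> V -> R, relaxed_feasible Sl Su gamma u /\
         relaxed_obj w C Sl Su gamma u = relaxed_value w C Sl Su gamma)].
Proof.
move=> h1 h2 h3 h4 h5 h6 h7 h8.
by apply: main_result.
Qed.
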